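(* Let $\rho>1$ and $\Psi=\{1,\rho,\rho^2,\dots\}$. For every $\varepsilon>0$, every $n\in\mathbb{N}$ and every function $h:\mathbb{N}\to\mathbb{N}$ with $h(n)\ge n$, there exists a finite set $W\subset\Psi$ with the following property: for every $\alpha\ge 1$ and every randomized algorithm $a$ for the single secretary problem with $n$ items that is $\alpha$-probability competitive over $W$, there exist another randomized algorithm $a'$ for the same problem that is also $\alpha$-probability competitive over $W$, and a set $W'\subseteq W$ with $|W'|=h(n)$, such that $a'$ is $\varepsilon$-value-oblivious on $W'$.
   Context: Single secretary problem with $n$ items: an instance is a set of $n$ pairwise distinct positive reals presented in uniformly random order. A randomized algorithm $a$ is a family of functions $a_i$, $i\in[n]$, where $a_i(v_1,\dots,v_i)\in[0,1]$ is the probability that $a$ stops at time $i$ and accepts $v_i$, given that the values seen so far are $v_1,\dots,v_i$ in this order and it has not stopped earlier. An algorithm is $\alpha$-probability competitive over a finite set $W$ if for every instance consisting of $n$ pairwise distinct elements of $W$, the probability (over the random order and internal randomness) that it accepts the maximum element is at least $1/\alpha$. An algorithm is $\varepsilon$-value-oblivious on a set $W'$ if for every $i\in[n]$ there is $q_i\in[0,1]$ such that for all pairwise distinct $v_1,\dots,v_i\in W'$ with $v_i>\max\{v_1,\dots,v_{i-1}\}$ we have $a_i(v_1,\dots,v_i)\in[q_i-\varepsilon,q_i+\varepsilon)$. *)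

(* Defs.v *)
From HB Require Import structures.
From mathcomp Require Import all_boot all_order all_algebra all_fingroup.
From mathcomp Require Import reals.
Set Implicit Arguments. Unset Strict Implicit. Unset Printing Implicit Defensive.
Import Order.TTheory GRing.Theory Num.Theory.
Local Open Scope ring_scope.

Section Secretary.
Variable R : realType.

(* A randomized algorithm is a function a : seq R -> R; a [:: v_1; ...; v_i]
   is a_i(v_1,...,v_i), the probability of stopping at time i and accepting
   v_i, given not stopped earlier. *)
Definition is_alg (n : nat) (a : seq R -> R) : Prop :=
  forall s : seq R, (0 < size s <= n)%N -> 0 <= a s <= 1.

Definition order_seq (n : nat) (x : 'I_n -> R) (s : 'S_n) : seq R :=
  [seq x (s k) | k <- enum 'I_n].

(* Probability (over a uniformly random order and internal randomness) that
   a accepts the maximum of the instance x.  At (0-based) time i the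
   algorithm stops with probability prod_{j<i} (1 - a_{j+1}) * a_{i+1}. *)
Definition win_prob (n : nat) (a : seq R -> R) (x : 'I_n -> R) : R :=
  (n`!%:R)^-1 * \sum_(s : 'S_n) \sum_(i < n)
     (if [forall j, x j <= x (s i)] then
        (\prod_(j < i) (1 - a (take j.+1 (order_seq x s))))
          * a (take i.+1 (order_seq x s))
      else 0).

Definition prob_competitive (n : nat) (alpha : R) (W : seq R) (a : seq R -> R) : Prop :=
  forall x : 'I_n -> R, injective x -> (forall i, x i \in W) ->
    alpha^-1 <= win_prob a x.

Definition value_oblivious (n : nat) (eps : R) (W' : seq R) (a : seq R -> R) : Prop :=
  forall i : nat, (1 <= i <= n)%N ->
    exists q : R, 0 <= q <= 1 /\
      forall v : seq R, size v = i -> uniq v -> (forall w, w \in v -> w \in W') ->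
        (forall j : nat, (j < i.-1)%N -> nth 0 v j < nth 0 v i.-1) ->
        q - eps <= a v < q + eps.

Definition in_Psi (rho w : R) : Prop := exists k : nat, w = rho ^+ k.

End Secretary.

(* Main.v *)
Require Import Defs.
From HB Require Import structures.
From mathcomp Require Import all_boot all_order all_algebra all_fingroup.
From mathcomp Require Import reals zify ring lra.
Set Implicit Arguments. Unset Strict Implicit. Unset Printing Implicit Defensive.
Import Order.TTheory GRing.Theory Num.Theory.
Definition rbounded (f : seq nat -> nat) (r c : nat) (G : seq nat) :=
  forall T, subseq T G -> size T = r -> f T < c.
Definition rhom (f : seq nat -> nat) (r c : nat) (M : seq nat) :=
  exists2 c0, c0 < c & forall T, subseq T M -> size T = r -> f T = c0.
Definition ramsey r := forall c m, 0 < c -> exists N, forall G f,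
  N <= size G -> rbounded f r c G -> exists M, [/\ subseq M G, size M = m & rhom f r c M].

Lemma rhom_sub f r c M1 M : rhom f r c M1 -> subseq M M1 -> rhom f r c M.
Proof. case=> c0 hc0 H sM; exists c0 => // T sT; apply: H; exact: subseq_trans sM. Qed.

Lemma rbounded_sub f r c G M : rbounded f r c G -> subseq M G -> rbounded f r c M.
Proof. move=> H sM T sT; apply: H; exact: subseq_trans sM. Qed.

Lemma ramsey0 : ramsey 0.
Proof.
move=> c m hc; exists m => G f hG hb; exists (take m G); split.
- exact: take_subseq.
- by rewrite size_takel.
- exists (f [::]); first by apply: hb; rewrite ?sub0seq.
  by move=> T _ /size0nil ->.
Qed.

Fixpoint good (f : seq nat -> nat) r c (xs cs : seq nat) : Prop :=
  match xs, cs with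
  | [::], [::] => True
  | x :: xs', c0 :: cs' => [/\ c0 < c,
        (forall T, subseq T xs' -> size T = r -> f (x :: T) = c0) &
        good f r c xs' cs']
  | _, _ => False
  end.

Lemma good_mask f r c xs cs c0 : good f r c xs cs -> forall T,
  subseq T (mask (map (pred1 c0) cs) xs) -> size T = r.+1 -> f T = c0.
Proof.
elim: xs cs => [|x xs IH] [|c1 cs] //=.
  by move=> _ T /eqP -> .
case=> hc1 Hx hg T.
case: (c1 =P c0) => [e|ne].
  subst c1.
  case: T => // y T /=; case: eqP => [->|_] sT [hs].
    apply: Hx => //; apply: subseq_trans sT (mask_subseq _ _).
  by apply: (IH cs hg) => //=; rewrite hs.
by move=> sT hs; apply: (IH cs hg).
Qed.

Lemma good_size f r c xs cs : good f r c xs cs -> size cs = size xs.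
Proof. by elim: xs cs => [|x xs IH] [|c1 cs] //= [_ _ /IH ->]. Qed.

Lemma good_all f r c xs cs : good f r c xs cs -> all (fun y => y < c) cs.
Proof. by elim: xs cs => [|x xs IH] [|c1 cs] //= [-> _ /IH ->]. Qed.

Lemma pigeon m : forall c cs, all (fun y => y < c) cs -> c * m < size cs ->
  exists2 c0, c0 < c & m < count (pred1 c0) cs.
Proof.
elim=> [|c IH] cs hall hs.
  by move: hall hs; case: cs => //= y cs /andP[].
case: (ltnP m (count (pred1 c) cs)) => hc; first by exists c.
have := IH (filter (predC (pred1 c)) cs).
case.
- rewrite all_filter; apply/allP => y yin /=; apply/implyP => hy.
  by move/allP: hall => /(_ y yin); rewrite ltnS leq_eqVlt (negPf hy).
- rewrite mulSn in hs; rewrite size_filter -(ltn_add2l m); apply: leq_trans hs _.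
  by rewrite -(count_predC (pred1 c) cs) leq_add2r.
move=> c0 hc0; rewrite count_filter => h; exists c0; first lia.
apply: leq_trans h _; apply: sub_count => y /andP[] //.
Qed.

Lemma build r c (Hr : ramsey r) (hc : 0 < c) L : exists N, forall G f,
  N <= size G -> rbounded f r.+1 c G ->
  exists xs cs, [/\ subseq xs G, size xs = L & good f r c xs cs].
Proof.
elim: L => [|L [NL HL]].
  by exists 0 => G f _ _; exists [::], [::]; rewrite sub0seq.
have [N' HN'] := Hr c NL hc.
exists N'.+1 => [[|x G]] f //= hG hb.
have hbg : rbounded (fun T => f (x :: T)) r c G.
  by move=> T sT hT; apply: hb; rewrite /= ?eqxx ?hT.
have [M [sM hM [c0 hc0 Hh]]] := HN' G _ hG hbg.
have hbM : rbounded f r.+1 c M.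
  apply: rbounded_sub hb _; apply: subseq_trans sM (subseq_cons _ _).
have [xs [cs [sx hx hg]]] := HL M f (eq_leq (esym hM)) hbM.
exists (x :: xs), (c0 :: cs); split => //=; first by rewrite eqxx; exact: subseq_trans sx sM.
- by rewrite hx.
- split => // T sT hT; apply: Hh => //; exact: subseq_trans sT sx.
Qed.

Lemma ramseyS r : ramsey r -> ramsey r.+1.
Proof.
move=> Hr c m hc; have [N HN] := build Hr hc (c * m).+1.
exists N => G f hG hb; have [xs [cs [sx hx hg]]] := HN G f hG hb.
have hcs := good_size hg.
have hcm : c * m < size cs by rewrite hcs hx.
have [c0 hc0 hcnt] := pigeon (good_all hg) hcm.
exists (take m (mask (map (pred1 c0) cs) xs)); split.
- apply: subseq_trans (take_subseq _ _) _; apply: subseq_trans (mask_subseq _ _) sx.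
- rewrite size_takel // size_mask ?size_map // count_map; exact: ltnW.
- exists c0 => // T sT hT; apply: (good_mask hg) => //.
  exact: subseq_trans sT (take_subseq _ _).
Qed.

Lemma ramsey_all r : ramsey r.
Proof. elim: r => [|r IH]; [exact: ramsey0 | exact: ramseyS]. Qed.

Lemma multi_ramsey n c m : 0 < c -> exists N, forall G (fs : nat -> seq nat -> nat),
  N <= size G -> (forall r, 0 < r <= n -> rbounded (fs r) r c G) ->
  exists M, [/\ subseq M G, size M = m & forall r, 0 < r <= n -> rhom (fs r) r c M].
Proof.
move=> hc; elim: n m => [|n IH] m.
  exists m => G fs hG _; exists (take m G); split => //.
  - exact: take_subseq.
  - by rewrite size_takel.
  - by move=> r; lia.
have [Nn HNn] := IH m.
have [N HN] := ramsey_all n.+1 Nn hc.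
exists N => G fs hG hb.
have hn1 : 0 < n.+1 <= n.+1 by rewrite leqnn.
have [M1 [s1 h1 hom1]] := HN G (fs n.+1) hG (hb _ hn1).
have hb1 : forall r, 0 < r <= n -> rbounded (fs r) r c M1.
  move=> r hr; apply: rbounded_sub s1; apply: hb; lia.
have [M [s2 h2 hom2]] := HNn M1 fs (eq_leq (esym h1)) hb1.
exists M; split => //; first exact: subseq_trans s2 s1.
move=> r hr; case: (ltnP n r) => hrn.
  have -> : r = n.+1 by lia.
  exact: rhom_sub hom1 s2.
by apply: hom2; lia.
Qed.
Local Open Scope ring_scope.

Section Ext.
Variable i : nat.
Variable sg : 'S_i.

Definition extn (k : nat) : nat :=
  if (insub k : option 'I_i) is Some k' then val (sg k') else k.

Lemma extnE k (hk : (k < i)%N) : extn k = sg (Ordinal hk).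
Proof. by rewrite /extn insubT. Qed.

Lemma extn_ge k : (i <= k)%N -> extn k = k.
Proof. by move=> hk; rewrite /extn insubN // -leqNgt. Qed.

Lemma extn_lt k : (k < i)%N -> (extn k < i)%N.
Proof. by move=> hk; rewrite (extnE hk). Qed.

Lemma extn_lt2 k m : (i <= m)%N -> (k < m)%N -> (extn k < m)%N.
Proof.
move=> him hk; case: (ltnP k i) => h; first by apply: leq_trans (extn_lt h) him.
by rewrite extn_ge.
Qed.

Lemma extn_inj : injective extn.
Proof.
move=> k1 k2; case: (ltnP k1 i) => h1; case: (ltnP k2 i) => h2.
- by rewrite !extnE => /val_inj /perm_inj [].
- by rewrite (extn_ge h2) => e; move: (extn_lt h1); rewrite e; lia.
- by rewrite (extn_ge h1) => e; move: (extn_lt h2); rewrite -e; lia.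
- by rewrite !extn_ge.
Qed.

Variable n : nat.
Definition fe (k : 'I_n) : 'I_n := if (i <= n)%N then insubd k (extn k) else k.
Lemma fe_inj : injective fe.
Proof.
move=> k1 k2; rewrite /fe; case: ifP => hin //.
move/(congr1 val); rewrite !val_insubd (extn_lt2 hin (ltn_ord k1)) (extn_lt2 hin (ltn_ord k2)).
by move/extn_inj/val_inj.
Qed.
Definition ext : 'S_n := perm fe_inj.

Lemma ext_val (hin : (i <= n)%N) (k : 'I_n) : val (ext k) = extn k.
Proof. by rewrite permE /fe hin val_insubd (extn_lt2 hin (ltn_ord k)). Qed.

Lemma ext_fix (hin : (i <= n)%N) (k : 'I_n) : (i <= k)%N -> ext k = k.
Proof. by move=> hk; apply: val_inj; rewrite ext_val // extn_ge. Qed.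
End Ext.

Lemma extn_mul i (s t : 'S_i) k : extn (s * t) k = extn t (extn s k).
Proof.
case: (ltnP k i) => h.
  rewrite (extnE (s * t) h) permM (extnE s h) (extnE t (ltn_ord (s (Ordinal h)))).
  by congr (val (t _)); apply: val_inj.
by rewrite !extn_ge.
Qed.

Lemma extn_ext i m (s : 'S_i) k : (i <= m)%N -> extn (ext s m) k = extn s k.
Proof.
move=> him; case: (ltnP k m) => h.
  by rewrite extnE ext_val.
by rewrite !extn_ge //; apply: leq_trans him h.
Qed.

Lemma ext_ext i m n (s : 'S_i) : (i <= m)%N -> (m <= n)%N -> ext s n = ext (ext s m) n.
Proof.
move=> him hmn; apply/permP => k; apply: val_inj.
by rewrite !ext_val ?extn_ext //; apply: leq_trans hmn.
Qed.
Section Seqs.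
Variable R : realType.
Variable a : seq R -> R.

Definition re i (s : 'S_i) (v : seq R) : seq R :=
  mkseq (fun k => nth 0 v (extn s k)) (size v).
Definition survA (w : seq R) : R := \prod_(j < (size w).-1) (1 - a (take j.+1 w)).
Definition Num i (v : seq R) : R := \sum_(s : 'S_i) survA (re s v) * a (re s v).
Definition Den i (v : seq R) : R := \sum_(s : 'S_i) survA (re s v).
Definition ap (v : seq R) : R := Num (size v).-1 v / Den (size v).-1 v.

Lemma size_re i (s : 'S_i) v : size (re s v) = size v.
Proof. by rewrite size_mkseq. Qed.

Lemma nth_re i (s : 'S_i) v k : (k < size v)%N -> nth 0 (re s v) k = nth 0 v (extn s k).
Proof. by move=> hk; rewrite nth_mkseq. Qed.

Lemma re_re i (s t : 'S_i) v : size v = i.+1 -> re s (re t v) = re (s * t) v.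
Proof.
move=> hv; apply: (@eq_from_nth _ 0); rewrite !size_re // => k hk.
rewrite !nth_re ?size_re // ?extn_mul //.
by apply: extn_lt2 hk; rewrite hv.
Qed.

Lemma Num_re i (t : 'S_i) v : size v = i.+1 -> Num i (re t v) = Num i v.
Proof.
move=> hv; rewrite /Num [RHS](reindex_inj (mulIg t)) /=.
by apply: eq_bigr => s _; rewrite re_re.
Qed.

Lemma Den_re i (t : 'S_i) v : size v = i.+1 -> Den i (re t v) = Den i v.
Proof.
move=> hv; rewrite /Den [RHS](reindex_inj (mulIg t)) /=.
by apply: eq_bigr => s _; rewrite re_re.
Qed.

Lemma ap_sz i v : size v = i.+1 -> ap v = Num i v / Den i v.
Proof. by rewrite /ap => ->. Qed.

Lemma ap_re i (t : 'S_i) v : size v = i.+1 -> ap (re t v) = ap v.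
Proof. by move=> hv; rewrite !(ap_sz (i := i)) ?size_re // Num_re // Den_re. Qed.

Lemma ap_perm (p p' : seq R) m : perm_eq p p' -> ap (rcons p m) = ap (rcons p' m).
Proof.
move=> hp; have hsz := perm_size hp.
have /tuple_permP [t ht] : perm_eq p (in_tuple p') := hp.
have -> : rcons p m = re t (rcons p' m).
  apply: (@eq_from_nth _ 0); rewrite ?size_re ?size_rcons ?hsz // => k hk.
  rewrite nth_re ?size_rcons // !nth_rcons hsz.
  case: (ltnP k (size p')) => hk2.
    rewrite (extnE t hk2) ltn_ord ht.
    rewrite (nth_map (Ordinal hk2)); last by rewrite size_enum_ord.
    have -> : nth (Ordinal hk2) (enum 'I_(size p')) k = Ordinal hk2.
      by apply: val_inj; rewrite /= nth_enum_ord.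
    by rewrite (tnth_nth 0).
  by rewrite extn_ge // ltnNge hk2.
by rewrite ap_re // size_rcons.
Qed.
End Seqs.
Section Sums.
Variable R : realType.
Variable n : nat.
Variable x : 'I_n -> R.

Lemma size_ord s : size (order_seq x s) = n.
Proof. by rewrite /order_seq size_map size_enum_ord. Qed.

Lemma nth_ord s k (hk : (k < n)%N) : nth 0 (order_seq x s) k = x (s (Ordinal hk)).
Proof.
rewrite /order_seq (nth_map (Ordinal hk)) ?size_enum_ord //.
by congr (x (s _)); apply: val_inj; rewrite /= nth_enum_ord.
Qed.

Definition u i s := take i.+1 (order_seq x s).

Lemma size_u i s : (i < n)%N -> size (u i s) = i.+1.
Proof. by move=> hi; rewrite size_takel // size_ord. Qed.

Definition Tb (b : seq R -> R) i s := \prod_(j < i) (1 - b (take j.+1 (order_seq x s))).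

Lemma T_survA b i s : (i < n)%N -> Tb b i s = survA b (u i s).
Proof.
move=> hi; rewrite /survA size_u //=; apply: eq_bigr => j _.
by rewrite /u take_takel // ltnS ltnW.
Qed.

Lemma u_ext i (hi : (i < n)%N) (sg : 'S_i) s : u i ((ext sg n * s)%g) = re sg (u i s).
Proof.
apply: (@eq_from_nth _ 0); rewrite ?size_re !size_u // => k hk.
have hkn : (k < n)%N by apply: leq_trans hk hi.
have hk2 : (extn sg k < i.+1)%N by apply: extn_lt2 hk.
have hk2n : (extn sg k < n)%N by apply: leq_trans hk2 hi.
rewrite nth_re ?size_u // /u !nth_take // !nth_ord permM.
congr (x (s _)); apply: val_inj; rewrite ext_val //; exact: ltnW.
Qed.

Lemma avg (G : 'S_n -> R) i :
  \sum_s G s = (i`!%:R)^-1 * \sum_s \sum_(sg : 'S_i) G ((ext sg n * s)%g).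
Proof.
rewrite exchange_big /=.
have -> : \sum_(sg : 'S_i) \sum_s G ((ext sg n * s)%g) = \sum_(sg : 'S_i) \sum_s G s.
  by apply: eq_bigr => sg _; rewrite [RHS](reindex_inj (mulgI (ext sg n))).
rewrite sumr_const card_Sn -(mulr_natl (\sum_s G s)) mulrA mulVf ?mul1r //.
by rewrite pnatr_eq0 -lt0n fact_gt0.
Qed.

Variable a : seq R -> R.
Hypothesis ha : is_alg n a.

Lemma survA_ge0 w : (size w <= n)%N -> 0 <= survA a w.
Proof.
move=> hw; apply: prodr_ge0 => j _; rewrite subr_ge0.
have hj : (0 < size (take j.+1 w) <= n)%N.
  rewrite size_takel; last by have := ltn_ord j; lia.
  by have := ltn_ord j; lia.
by have /andP[_ ->] := ha hj.
Qed.

Lemma a_ge0 w : (0 < size w <= n)%N -> 0 <= a w.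
Proof. by move/ha/andP=> []. Qed.
Lemma a_le1 w : (0 < size w <= n)%N -> a w <= 1.
Proof. by move/ha/andP=> []. Qed.

Lemma Num_Den i v : size v = i.+1 -> (i < n)%N -> ap a v * Den a i v = Num a i v.
Proof.
move=> hv hi; rewrite (ap_sz a hv).
have [D0|Dn0] := eqVneq (Den a i v) 0; last by rewrite divfK.
rewrite D0 mulr0 /Num; symmetry; apply: big1 => s _.
have -> : survA a (re s v) = 0.
  have hz : \sum_(s' : 'S_i) survA a (re s' v) = 0 := D0.
  apply: (psumr_eq0P _ hz) => // s' _; apply: survA_ge0.
  by rewrite size_re hv.
by rewrite mul0r.
Qed.

Lemma ap_in01 v : (0 < size v <= n)%N -> 0 <= ap a v <= 1.
Proof.
move=> hv; have hv' : size v = (size v).-1.+1 by lia.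
set i := (size v).-1 in hv'.
have hi : (i < n)%N by lia.
have hre : forall s : 'S_i, (0 < size (re s v) <= n)%N by move=> s; rewrite size_re.
have hN : 0 <= Num a i v.
  apply: sumr_ge0 => s _; apply: mulr_ge0; [apply: survA_ge0|apply: a_ge0] => //.
  by have /andP[] := hre s.
have hD : 0 <= Den a i v.
  by apply: sumr_ge0 => s _; apply: survA_ge0; have /andP[] := hre s.
have hND : Num a i v <= Den a i v.
  apply: ler_sum => s _; rewrite -[leRHS]mulr1; apply: ler_wpM2l; last exact: a_le1.
  by apply: survA_ge0; have /andP[] := hre s.
rewrite (ap_sz a hv'); apply/andP; split; first exact: divr_ge0.
have [D0|Dn0] := eqVneq (Den a i v) 0; first by rewrite D0 invr0 mulr0.
by rewrite ler_pdivrMr ?mul1r // lt_def Dn0 hD.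
Qed.

Lemma is_alg_ap : is_alg n (ap a).
Proof. by move=> v hv; apply: ap_in01. Qed.

Definition invar i (F : 'S_n -> R) := forall (sg : 'S_i) s, F ((ext sg n * s)%g) = F s.

Lemma L1 i (hi : (i < n)%N) (F : 'S_n -> R) : invar i F ->
  \sum_s Tb a i s * ap a (u i s) * F s = \sum_s Tb a i s * a (u i s) * F s.
Proof.
move=> hF; rewrite (avg _ i) [RHS](avg _ i); congr (_ * _); apply: eq_bigr => s _.
have e1 : forall sg : 'S_i, Tb a i ((ext sg n * s)%g) = survA a (re sg (u i s)).
  by move=> sg; rewrite T_survA // u_ext.
transitivity (\sum_(sg : 'S_i) survA a (re sg (u i s)) * ap a (u i s) * F s).
  apply: eq_bigr => sg _; rewrite e1 hF u_ext // ap_re // size_u //.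
transitivity (\sum_(sg : 'S_i) survA a (re sg (u i s)) * a (re sg (u i s)) * F s); last first.
  by apply: eq_bigr => sg _; rewrite e1 hF u_ext.
rewrite -!mulr_suml; congr (_ * _).
by rewrite mulrC (Num_Den (size_u s hi) hi).
Qed.

Lemma TbS (b : seq R -> R) i s : Tb b i.+1 s = Tb b i s * (1 - b (u i s)).
Proof. by rewrite /Tb big_ord_recr. Qed.

Lemma invar_mono i F : (i < n)%N -> invar i.+1 F -> invar i F.
Proof.
move=> hi hF sg s; rewrite (@ext_ext i i.+1 n sg) //; exact: hF.
Qed.

Lemma L2 i : (i <= n)%N -> forall F, invar i F ->
  \sum_s Tb (ap a) i s * F s = \sum_s Tb a i s * F s.
Proof.
elim: i => [|i IH] hi F hF.
  by apply: eq_bigr => s _; rewrite /Tb !big_ord0.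
have hi' : (i < n)%N by [].
have hF' := invar_mono hi' hF.
transitivity (\sum_s Tb (ap a) i s * ((1 - ap a (u i s)) * F s)).
  by apply: eq_bigr => s _; rewrite TbS mulrA.
rewrite (IH (ltnW hi') (fun s => (1 - ap a (u i s)) * F s)); last first.
  by move=> sg s /=; rewrite u_ext // ap_re ?size_u // hF'.
transitivity (\sum_s Tb a i s * F s - \sum_s Tb a i s * ap a (u i s) * F s).
  by rewrite -sumrB; apply: eq_bigr => s _; ring.
rewrite L1 // -sumrB; apply: eq_bigr => s _; rewrite TbS; ring.
Qed.

Lemma win_eq : win_prob (ap a) x = win_prob a x.
Proof.
rewrite /win_prob; congr (_ * _). 
rewrite exchange_big [RHS]exchange_big /=.
apply: eq_bigr => i _.
pose chi s : R := if [forall j, x j <= x (s i)] then 1 else 0.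
have hchi : invar i chi.
  move=> sg s; rewrite /chi permM ext_fix //; exact: ltnW.
transitivity (\sum_s Tb (ap a) i s * (ap a (u i s) * chi s)).
  apply: eq_bigr => s _; rewrite /chi; case: ifP => _. 
    rewrite mulr1 /Tb /u. reflexivity.
  by rewrite !mulr0.
rewrite L2; last 2 first.
- exact: ltnW.
- by move=> sg s; rewrite hchi u_ext // ap_re ?size_u.
transitivity (\sum_s Tb a i s * a (u i s) * chi s); last first.
  apply: eq_bigr => s _; rewrite /chi; case: ifP => _. 
    rewrite mulr1 /Tb /u. reflexivity.
  by rewrite !mulr0.
rewrite -L1 //; apply: eq_bigr => s _; by rewrite mulrA.
Qed.
End Sums.

Section Rep.
Variable R : realType.
Variable rho : R.
Hypothesis hrho : 1 < rho.
Variable a : seq R -> R.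

Definition rexp (k : nat) : R := rho ^+ k.

Lemma rexp_lt k1 k2 : (k1 < k2)%N -> rexp k1 < rexp k2.
Proof. by move=> h; rewrite /rexp ltr_eXn2l. Qed.

Lemma rexp_inj : injective rexp.
Proof.
move=> k1 k2 e; case: (ltngtP k1 k2) => // h.
- by have := rexp_lt h; rewrite e ltxx.
- by have := rexp_lt h; rewrite e ltxx.
Qed.

Lemma rep (M : seq nat) (v : seq R) : sorted ltn M -> uniq v ->
  (forall w, w \in v -> w \in map rexp M) -> (0 < size v)%N ->
  (forall j, (j < (size v).-1)%N -> nth 0 v j < nth 0 v (size v).-1) ->
  exists T, [/\ subseq T M, size T = size v & ap a v = ap a (map rexp T)].
Proof.
move=> sM uv vM hv hlast.
set T := filter (fun k => rexp k \in v) M.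
have sT : sorted ltn T by apply: sorted_filter => //; exact: ltn_trans.
have uT : uniq T by apply: sorted_uniq sT => //; [exact: ltn_trans | exact: ltnn].
set w := map rexp T.
have uw : uniq w by rewrite map_inj_uniq //; exact: rexp_inj.
have ew : w =i v.
  move=> y; apply/idP/idP.
    by case/mapP => k; rewrite mem_filter => /andP[h _] ->.
  move=> yv; have /mapP [k kM ek] := vM y yv.
  by rewrite ek; apply: map_f; rewrite mem_filter kM andbT -ek.
have pw : perm_eq w v by apply: uniq_perm.
have szw : size w = size v by apply: perm_size.
have sw : sorted (fun p q : R => p < q) w.
  by apply: homo_sorted sT => k1 k2; exact: rexp_lt.
set i := (size v).-1.
have hi : (i < size v)%N by rewrite /i; lia.
have hiw : (i < size w)%N by rewrite szw.
set m := nth 0 v i.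
set m' := nth 0 w i.
have hsw := sorted_ltn_nth lt_trans 0 sw.
have le1 : m <= m'.
  have mw : m \in w by rewrite ew mem_nth.
  have hj : (index m w < size w)%N by rewrite index_mem.
  rewrite -(nth_index 0 mw).
  have : (index m w <= i)%N by move: hj; rewrite szw /i; lia.
  rewrite leq_eqVlt => /orP[/eqP -> //|hlt].
  by apply: ltW; apply: hsw.
have emm : m = m'.
  have m'v : m' \in v by rewrite -ew mem_nth.
  have hj : (index m' v < size v)%N by rewrite index_mem.
  have : (index m' v <= i)%N by move: hj; rewrite /i; lia.
  rewrite leq_eqVlt => /orP[/eqP e|hlt].
    by rewrite /m -e nth_index.
  have := hlast _ hlt; rewrite nth_index // -/i -/m => h.
  by move: (lt_le_trans h le1); rewrite ltxx.
have ev : v = rcons (take i v) m.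
  by rewrite -take_nth // /i prednK // take_size.
have eww : w = rcons (take i w) m.
  by rewrite emm -take_nth // /i prednK // -szw take_size.
exists T; split => //; first exact: filter_subseq.
  by rewrite -szw size_map.
rewrite -/w ev eww; apply: ap_perm.
have : perm_eq (rcons (take i v) m) (rcons (take i w) m) by rewrite -ev -eww perm_sym.
by rewrite -!cats1 perm_cat2r.
Qed.
End Rep.

Theorem lemma5p5 (R : realType) (rho : R) (hrho : 1 < rho)
  (eps : R) (heps : 0 < eps) (n : nat) (h : nat -> nat) (hh : (n <= h n)%N) :
  exists W : seq R,
    uniq W /\ (forall w, w \in W -> in_Psi rho w) /\
    forall (alpha : R) (a : seq R -> R),
      1 <= alpha -> is_alg n a -> prob_competitive n alpha W a ->
      exists (a' : seq R -> R) (W' : seq R),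
        is_alg n a' /\ prob_competitive n alpha W a' /\
        uniq W' /\ (forall w, w \in W' -> w \in W) /\ size W' = h n /\
        value_oblivious n eps W' a'.
Proof.
set K := (Num.truncn eps^-1).+1.
have hc : (0 < K.+1)%N by [].
have [N HN] := multi_ramsey n (h n) hc.
exists (map (rexp rho) (iota 0 N)); split; [|split].
- rewrite map_inj_uniq ?iota_uniq //; exact: rexp_inj hrho.
- by move=> w /mapP [k _ ->]; exists k.
move=> alpha a halpha halg hcomp.
pose fs (r : nat) (T : seq nat) := Num.truncn (ap a (map (rexp rho) T) * K%:R).
have hK : 0 < K%:R :> R by rewrite ltr0n.
have hb : forall r, (0 < r <= n)%N -> rbounded (fs r) r K.+1 (iota 0 N).
  move=> r hr T sT hT; rewrite /fs ltnS truncn_le_nat.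
  have := @ap_in01 R n a halg (map (rexp rho) T); rewrite size_map hT => /(_ hr) /andP[h0 h1].
  apply: le_lt_trans (_ : K%:R < K.+1%:R); last by rewrite ltr_nat.
  by rewrite -[leRHS]mul1r ler_wpM2r // ltW.
have [M [sM hM homM]] := HN (iota 0 N) fs (eq_leq (esym (size_iota 0 N))) hb.
exists (ap a), (map (rexp rho) M); split; [|split; [|split; [|split; [|split]]]].
- exact: (@is_alg_ap R n a halg).
- by move=> x hx hW; rewrite (@win_eq R n x a halg); exact: hcomp.
- rewrite map_inj_uniq; [exact: subseq_uniq sM (iota_uniq _ _)| exact: rexp_inj hrho].
- move=> w hw; apply: mem_subseq hw; exact: map_subseq.
- by rewrite size_map.
move=> i hi; have [c0 hc0 Hc] := homM i hi.
set k : R := K%:R.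
have hek : 1 < eps * k.
  have h1 := truncnS_gt (eps^-1).
  by rewrite -/K -/k -(ltr_pM2l heps) mulfV ?gt_eqF // in h1.
exists (c0%:R / k); split.
  apply/andP; split; first by apply: divr_ge0; rewrite ?ler0n ?ltW.
  by rewrite ler_pdivrMr // mul1r ler_nat -ltnS.
move=> v hsz uv vW hl.
have sortM : sorted ltn M := (@subseq_sorted _ ltn ltn_trans _ _ sM (iota_ltn_sorted 0 N)).
have hv0 : (0 < size v)%N by rewrite hsz; lia.
have hl' : forall j, (j < (size v).-1)%N -> nth 0 v j < nth 0 v (size v).-1.
  by rewrite hsz.
have [T [sT hT hap]] := @rep R rho hrho a M v sortM uv vW hv0 hl'.
have := Hc T sT (etrans hT hsz); rewrite /fs -hap => e.
have hy : 0 <= ap a v * k.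
  have hvn : (0 < size v <= n)%N by rewrite hsz.
  have /andP[h0 _] := @ap_in01 R n a halg v hvn.
  by rewrite mulr_ge0 // ltW.
have := truncn_itv hy; rewrite e -natr1 => /andP [l1 l2].
set y := ap a v in l1 l2 *.
set q := c0%:R / k.
have hq : c0%:R = q * k by rewrite divfK // gt_eqF.
rewrite hq in l1 l2.
apply/andP; split; nra.
Qed.
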